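(* Let $\mathbb{F}$ be a finite field, let $n, r, s$ be positive integers, and let $A \in \mathbb{F}^{(r+s)n \times (r+s)n}$ be a totally-non-singular lower-triangular matrix. For $v \in \mathbb{F}^s$ let $v' \in \mathbb{F}^{r+s}$ be obtained by appending $r$ zeros to $v$, and for $x = (x_1,\dots,x_k) \in (\mathbb{F}^s)^k$ let $x' = (x'_1,\dots,x'_k) \in \mathbb{F}^{(r+s)k}$. Define $\mathsf{TC}^{(n)}_{A,(s,r)}\colon (\mathbb{F}^s)^{(\leq n)} \to (\mathbb{F}^{r+s})^{(\leq n)}$ by mapping $x \in (\mathbb{F}^s)^k$ ($k \leq n$) to $A^{((r+s)k)} x' \in \mathbb{F}^{(r+s)k}$, viewed as an element of $(\mathbb{F}^{r+s})^k$ by grouping consecutive blocks of $r+s$ coordinates. Then $\mathsf{TC}^{(n)}_{A,(s,r)}$ is an $n$-truncated MDS tree code with distance $\frac{r}{r+s}$.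
   Context: For an $m \times m$ matrix $A$ and $k \leq m$, $A^{(k)}$ denotes the top-left $k \times k$ submatrix of $A$; for index sets $I,J$, $A[I|J]$ is the submatrix with rows $I$ and columns $J$. A lower-triangular $A \in \mathbb{F}^{m \times m}$ is totally-non-singular if for every $1 \leq t \leq m$ and all $I = \{i_1 < \dots < i_t\}, J = \{j_1 < \dots < j_t\} \subseteq [m]$ with $i_u \geq j_u$ for all $u \in [t]$, the submatrix $A[I|J]$ is non-singular. An $n$-truncated tree code $\mathsf{TC}^{(n)}\colon \Sigma^{(\leq n)} \to \Gamma^{(\leq n)}$ maps each string of length $k \leq n$ over $\Sigma$ to a string of length $k$ over $\Gamma$ such that the $i$-th output symbol depends only on the first $i$ input symbols. For $x \neq x' \in \Sigma^k$, $\operatorname{split}(x,x')$ is the largest $t$ with $x_u = x'_u$ for all $u \leq t$; $\Delta$ is Hamming distance over $\Gamma$. Its distance is $\delta_{\mathsf{TC}^{(n)}} := \inf_{k \leq n,\, x \neq x' \in \Sigma^k} \frac{\Delta(\mathsf{TC}^{(n)}(x),\mathsf{TC}^{(n)}(x'))}{k - \operatorname{split}(x,x')}$. It is maximum-distance separable (MDS) if $\delta_{\mathsf{TC}^{(n)}} > 1 - \frac{\log|\Sigma|}{\log|\Gamma|}$. *)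

(* Defs.v *)
From HB Require Import structures.
From mathcomp Require Import all_boot all_order all_algebra.
From mathcomp Require Import boolp classical_sets reals exp.
Set Implicit Arguments. Unset Strict Implicit. Unset Printing Implicit Defensive.
Import Order.TTheory GRing.Theory Num.Theory.
Local Open Scope ring_scope.
Local Open Scope classical_set_scope.

Definition lower_triangular (F : fieldType) (m : nat) (A : 'M[F]_m) : Prop :=
  forall i j : 'I_m, (i < j)%N -> A i j = 0.

Definition totally_non_singular (F : fieldType) (m : nat) (A : 'M[F]_m) : Prop :=
  forall (t : nat) (f g : 'I_t -> 'I_m),
    (0 < t)%N ->
    (forall u v : 'I_t, (u < v)%N -> (f u < f v)%N) ->
    (forall u v : 'I_t, (u < v)%N -> (g u < g v)%N) ->
    (forall u : 'I_t, (g u <= f u)%N) ->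
    \det (mxsub f g A) != 0.

Definition is_truncated_tree_code (S G : eqType) (n : nat)
    (TC : seq S -> seq G) : Prop :=
  (forall x, (size x <= n)%N -> size (TC x) = size x) /\
  (forall x y (i : nat), (size x <= n)%N -> (size y <= n)%N ->
     (i < size x)%N -> (i < size y)%N ->
     take i.+1 x = take i.+1 y -> onth (TC x) i = onth (TC y) i).

Definition split_at (S : eqType) (x y : seq S) : nat :=
  (\max_(t < (size x).+1 | take t x == take t y) t)%N.

Definition hamming (G : eqType) (a b : seq G) : nat :=
  count (fun p => p.1 != p.2) (zip a b).

Definition tc_distance (R : realType) (S G : eqType) (n : nat)
    (TC : seq S -> seq G) : R :=
  inf [set d : R | exists x y : seq S,
        [/\ size x = size y, (size x <= n)%N, x != y &
            d = (hamming (TC x) (TC y))%:R / (size x - split_at x y)%:R]].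

Definition is_MDS (R : realType) (S G : finType) (n : nat)
    (TC : seq S -> seq G) : Prop :=
  1 - ln (#|S|%:R : R) / ln (#|G|%:R : R) < tc_distance R n TC.

(* entry of a matrix indexed by naturals (0 outside the range) *)
Definition mxnat (F : ringType) (m : nat) (A : 'M[F]_m) (i j : nat) : F :=
  match insub i, insub j with
  | Some i', Some j' => A i' j'
  | _, _ => 0
  end.

Definition rvnat (F : ringType) (m : nat) (v : 'rV[F]_m) (c : nat) : F :=
  if insub c is Some c' then v ord0 c' else 0.

(* j-th coordinate (0-based) of x' = (x'_1,...,x'_k) in F^{(r+s)k}, where
   v' = (v, 0,...,0) appends r zeros to v in F^s *)
Definition padded_coord (F : ringType) (s r : nat) (x : seq 'rV[F]_s)
    (j : nat) : F :=
  let b := (j %/ (r + s))%N in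
  let c := (j %% (r + s))%N in
  if (c < s)%N then rvnat (nth 0 x b) c else 0.

(* x |-> A^{((r+s)k)} x', grouped into k blocks of r+s coordinates *)
Definition TC_A (F : ringType) (n s r : nat) (A : 'M[F]_((r + s) * n))
    (x : seq 'rV[F]_s) : seq 'rV[F]_(r + s) :=
  let k := size x in
  [seq \row_(c < r + s)
      \sum_(j < (r + s) * k)
         mxnat A ((r + s) * i + c)%N j * padded_coord r x j
  | i <- iota 0 k].

(* Main.v *)
Require Import Defs.
From HB Require Import structures.
From mathcomp Require Import all_boot all_order all_algebra.
From mathcomp Require Import boolp classical_sets reals exp.
From mathcomp Require Import zify ring.
Set Implicit Arguments. Unset Strict Implicit. Unset Printing Implicit Defensive.
Import Order.TTheory GRing.Theory Num.Theory.
Local Open Scope ring_scope.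

Definition lowt (F : fieldType) (a : nat -> nat -> F) :=
  forall i j, (i < j)%N -> a i j = 0.

Definition tnsn (F : fieldType) (m : nat) (a : nat -> nat -> F) :=
  forall (w : nat) (fz fj : nat -> nat), (0 < w)%N ->
    (forall u v, (u < v < w)%N -> (fz u < fz v)%N) ->
    (forall u v, (u < v < w)%N -> (fj u < fj v)%N) ->
    (forall u, (u < w)%N -> (fz u < m)%N) ->
    (forall u, (u < w)%N -> (fj u <= fz u)%N) ->
    \det (\matrix_(u < w, v < w) a (fz u) (fj v)) != 0.

Lemma mxnatE (F : fieldType) m (A : 'M[F]_m.+1) i j :
  (i < m.+1)%N -> (j < m.+1)%N -> mxnat A i j = A (inord i) (inord j).
Proof.
move=> hi hj; rewrite /mxnat.
case: insubP => [i' _ ei|]; last by rewrite hi.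
case: insubP => [j' _ ej|]; last by rewrite hj.
by congr (A _ _); apply: val_inj; rewrite /= inordK.
Qed.

Lemma mxnat_out (F : fieldType) m (A : 'M[F]_m) i j :
  (m <= i)%N -> mxnat A i j = 0.
Proof. by move=> h; rewrite /mxnat insubF // ltnNge h. Qed.

Lemma lowt_mxnat (F : fieldType) m (A : 'M[F]_m) :
  lower_triangular A -> lowt (mxnat A).
Proof.
move=> L i j ij; rewrite /mxnat.
case: insubP => [i' _ ei|//]; case: insubP => [j' _ ej|//].
by apply: L; rewrite ei ej.
Qed.

Lemma tnsn_of (F : fieldType) m (A : 'M[F]_m) :
  totally_non_singular A -> tnsn m (mxnat A).
Proof.
move=> H w fz fj w0 incz incj ltm le.
case: m A H ltm => [|m] A H ltm; first by have := ltm 0%N w0.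
have := H w (fun u => inord (fz u)) (fun u => inord (fj u)) w0.
have ltj : forall u, (u < w)%N -> (fj u < m.+1)%N.
  by move=> u hu; apply: leq_ltn_trans (le u hu) (ltm u hu).
have -> : mxsub (fun u : 'I_w => inord (fz u) : 'I_m.+1)
                (fun u : 'I_w => inord (fj u) : 'I_m.+1) A =
          \matrix_(u < w, v < w) mxnat A (fz u) (fj v).
  by apply/matrixP => u v; rewrite !mxE mxnatE ?ltm ?ltj.
apply.
- by move=> u v uv; rewrite !inordK ?ltm // incz // uv ltn_ord.
- by move=> u v uv; rewrite !inordK ?ltj // incj // uv ltn_ord.
- by move=> u; rewrite !inordK ?ltj ?ltm ?le.
Qed.

Lemma nth_filter_iota_le (P : pred nat) p i u : (i <= p)%N ->
  (u < count P (iota 0 p.+1))%N ->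
  (nth 0%N (filter P (iota 0 p.+1)) u <= i)%N = (u < count P (iota 0 i.+1))%N.
Proof.
move=> ip hu.
have E : iota 0 p.+1 = iota 0 i.+1 ++ iota i.+1 (p - i).
  by rewrite -iotaD; congr iota; lia.
move: hu; rewrite E filter_cat nth_cat size_filter count_cat => hu.
case: ifP => h.
  have : nth 0%N (filter P (iota 0 i.+1)) u \in iota 0 i.+1.
    have h' : (u < size (filter P (iota 0 i.+1)))%N by rewrite size_filter.
    by have := mem_nth 0%N h'; rewrite mem_filter => /andP[].
  by rewrite mem_iota /= add0n ltnS => ->.
have h2 : (u - count P (iota 0 i.+1) < size (filter P (iota i.+1 (p - i))))%N.
  by rewrite size_filter; move/negbT: h; lia.
have := mem_nth 0%N h2; rewrite mem_filter mem_iota => /andP[_ /andP[h3 _]].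
by apply/negbTE; rewrite -ltnNge.
Qed.

Lemma sum_ext_zero (V : nmodType) n1 n2 (G : nat -> V) : (n1 <= n2)%N ->
  (forall j, (n1 <= j < n2)%N -> G j = 0) ->
  \sum_(j < n2) G j = \sum_(j < n1) G j.
Proof.
move=> h H; rewrite -!(big_mkord xpredT) (big_cat_nat (leq0n n1) h) /=.
rewrite [X in _ + X]big1_seq ?addr0 // => j /andP[_].
by rewrite mem_index_iota => /H.
Qed.

Lemma sum_restrict (F : fieldType) m (a : nat -> nat -> F) (d : nat -> F) i p :
  lowt a -> (i <= p)%N -> (p < m)%N ->
  \sum_(j < m) a i j * d j =
  \sum_(v < size (filter (fun j => d j != 0) (iota 0 p.+1)))
      a i (nth 0%N (filter (fun j => d j != 0) (iota 0 p.+1)) v) *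
      d (nth 0%N (filter (fun j => d j != 0) (iota 0 p.+1)) v).
Proof.
move=> L ip pm.
rewrite (@sum_ext_zero _ p.+1 m (fun j => a i j * d j)) //; last first.
  by move=> j /andP[hj _]; rewrite L ?mul0r //; lia.
rewrite -(big_mkord xpredT (fun v => a i (nth 0%N _ v) * d (nth 0%N _ v))).
rewrite -(big_nth 0%N xpredT (fun j => a i j * d j)) big_filter.
rewrite -(big_mkord xpredT (fun j => a i j * d j)) /index_iota subn0.
rewrite (bigID (fun j => d j != 0)) /= [X in _ + X]big1 ?addr0 //.
by move=> j /negPn/eqP ->; rewrite mulr0.
Qed.

Lemma key (F : fieldType) m (a : nat -> nat -> F) (d : nat -> F) j1 :
  lowt a -> tnsn m a -> d j1 != 0 -> (forall j, (j < j1)%N -> d j = 0) ->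
  forall p, (j1 <= p < m)%N ->
  (count (fun i => (j1 <= i)%N && (\sum_(j < m) a i j * d j == 0)%R) (iota 0 p.+1)
   < count (fun j => d j != 0)%R (iota 0 p.+1))%N.
Proof.
move=> L T dj1 dlt p; elim/ltn_ind: p => p IH /andP[j1p pm].
set Pz := fun i => _; set Pd := fun j => _.
set zs := filter Pz (iota 0 p.+1); set js := filter Pd (iota 0 p.+1).
rewrite ltnNge; apply/negP => Hle.
have w0 : (0 < size js)%N.
  rewrite size_filter -has_count; apply/hasP; exists j1 => //.
  by rewrite mem_iota /= add0n ltnS.
have szs : (size js <= size zs)%N by rewrite !size_filter.
have zsp : forall u, (u < size zs)%N -> (nth 0%N zs u <= p)%N /\ Pz (nth 0%N zs u).
  move=> u hu; have := mem_nth 0%N hu; rewrite mem_filter mem_iota => /andP[pz /andP[_]].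
  by rewrite add0n ltnS.
have jsp : forall u, (u < size js)%N -> (nth 0%N js u <= p)%N /\ Pd (nth 0%N js u).
  move=> u hu; have := mem_nth 0%N hu; rewrite mem_filter mem_iota => /andP[pz /andP[_]].
  by rewrite add0n ltnS.
have srtz : sorted ltn zs by apply: sorted_filter; [exact: ltn_trans|exact: iota_ltn_sorted].
have srtj : sorted ltn js by apply: sorted_filter; [exact: ltn_trans|exact: iota_ltn_sorted].
have incz : forall u v, (u < v < size js)%N -> (nth 0%N zs u < nth 0%N zs v)%N.
  move=> u v /andP[uv vw]; apply: (sorted_ltn_nth ltn_trans 0%N srtz) => //;
    rewrite inE; apply: leq_trans szs; lia.
have incj : forall u v, (u < v < size js)%N -> (nth 0%N js u < nth 0%N js v)%N.
  move=> u v /andP[uv vw]; apply: (sorted_ltn_nth ltn_trans 0%N srtj) => //;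
    rewrite inE; lia.
have ltm : forall u, (u < size js)%N -> (nth 0%N zs u < m)%N.
  move=> u hu; have [h _] := zsp u (leq_trans hu szs); lia.
have inter : forall u, (u < size js)%N -> (nth 0%N js u <= nth 0%N zs u)%N.
  move=> u hu; have huz : (u < size zs)%N by apply: leq_trans hu szs.
  have [ip pzi] := zsp u huz.
  have hi : (u < count Pz (iota 0 (nth 0%N zs u).+1))%N.
    by rewrite -(@nth_filter_iota_le Pz p) // -size_filter.
  move: (nth 0%N zs u) ip pzi hi => i ip pzi hi.
  rewrite nth_filter_iota_le //; last by rewrite -size_filter.
  move: ip; rewrite leq_eqVlt => /orP[/eqP ->|ip]; first by rewrite -size_filter.
  apply: (leq_trans hi); apply: ltnW; apply: IH => //.
  by move: pzi => /andP[-> _]; apply: (ltn_trans ip pm).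
have := T (size js) (nth 0%N zs) (nth 0%N js) w0 incz incj ltm inter.
suff E : \det (\matrix_(u < size js, v < size js) a (nth 0%N zs u) (nth 0%N js v)) = 0 by rewrite E eqxx.
  apply/eqP; rewrite -det_tr; apply/det0P.
  exists (\row_(v < size js) d (nth 0%N js v)).
    apply/eqP => /matrixP/(_ ord0 (Ordinal w0)); rewrite !mxE => /eqP.
    by have [_ /negbTE ->] := jsp 0%N w0.
  apply/rowP => u; rewrite !mxE.
  have huz : (u < size zs)%N by apply: leq_trans (ltn_ord u) szs.
  have [ip /andP[_ /eqP oz]] := zsp u huz.
  rewrite -[RHS]oz (sum_restrict _ L ip pm).
  by apply: eq_bigr => v _; rewrite !mxE mulrC.
Qed.

Definition TCrow (F : ringType) n s r (A : 'M[F]_((r + s) * n))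
    (x : seq 'rV[F]_s) (i : nat) : 'rV[F]_(r + s) :=
  \row_(c < r + s) \sum_(j < (r + s) * size x)
         mxnat A ((r + s) * i + c)%N j * padded_coord r x j.

Lemma onth_iota a k i : (i < k)%N -> onth (iota a k) i = Some (a + i)%N.
Proof. by move=> h; rewrite onthE (nth_map 0%N) ?size_iota // nth_iota. Qed.

Lemma onth_TC (F : ringType) n s r (A : 'M[F]_((r + s) * n)) x i :
  (i < size x)%N -> onth (TC_A A x) i = Some (TCrow A x i).
Proof. by move=> h; rewrite /TC_A onth_map onth_iota. Qed.

Lemma rvnatE (F : ringType) s (v : 'rV[F]_s) (c : 'I_s) : rvnat v c = v ord0 c.
Proof.
rewrite /rvnat; case: insubP => [c' _ /val_inj -> //|]; by rewrite ltn_ord.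
Qed.

Lemma TC_causal (F : fieldType) n s r (A : 'M[F]_((r + s) * n)) x y i :
  lower_triangular A -> (0 < r + s)%N ->
  (i < size x)%N -> (i < size y)%N -> take i.+1 x = take i.+1 y ->
  TCrow A x i = TCrow A y i.
Proof.
move=> Lo N0 hx hy ht; apply/rowP => c; rewrite !mxE.
have L := lowt_mxnat Lo.
have E : forall z : seq 'rV[F]_s, (i < size z)%N ->
   \sum_(j < (r + s) * size z) mxnat A ((r + s) * i + c)%N j * padded_coord r z j
 = \sum_(j < (r + s) * i + (r + s)) mxnat A ((r + s) * i + c)%N j * padded_coord r z j.
  move=> z hz; apply: (@sum_ext_zero _ _ _ (fun j => mxnat A ((r + s) * i + c)%N j * padded_coord r z j)).
    by have := leq_mul (leqnn (r + s)) hz; rewrite mulnS addnC.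
  by move=> j /andP[hj _]; rewrite L ?mul0r //; have := ltn_ord c; lia.
rewrite !E //; apply: eq_bigr => j _; congr (_ * _).
have hj : (j %/ (r + s) < i.+1)%N by rewrite ltn_divLR //; have := ltn_ord j; nia.
by rewrite /padded_coord -(nth_take 0 hj x) ht nth_take.
Qed.

Lemma count_zip_map (T U V : Type) (P : pred (U * V)) (f : T -> U) (g : T -> V) s :
  count P (zip (map f s) (map g s)) = count (fun i => P (f i, g i)) s.
Proof. by elim: s => //= a s ->. Qed.

Lemma count_blocks_ge (P : pred nat) N a b :
  (N * count (fun B => all P (iota (N * B) N)) (iota a b) <= count P (iota (N * a) (N * b)))%N.
Proof.
elim: b a => [|b IH] a /=; first by rewrite muln0.
rewrite mulnS iotaD count_cat mulnDr.
have -> : (N * a + N = N * a.+1)%N by rewrite mulnS addnC.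
apply: leq_add; last exact: IH.
case: (boolP (all _ _)) => h; last by rewrite muln0.
by move: h; rewrite all_count size_iota muln1 => /eqP ->.
Qed.

Lemma count_blocks_le (P : pred nat) N s' a b :
  (forall q, (s' <= q %% N)%N -> ~~ P q) -> (s' <= N)%N ->
  (count P (iota (N * a) (N * b)) <= s' * b)%N.
Proof.
move=> HP sN; elim: b a => [|b IH] a /=; first by rewrite muln0.
rewrite mulnS iotaD count_cat mulnS.
have -> : (N * a + N = N * a.+1)%N by rewrite mulnS addnC.
apply: leq_add; last exact: IH.
have -> : iota (N * a) N = iota (N * a) s' ++ iota (N * a + s') (N - s').
  by rewrite -iotaD subnKC.
rewrite count_cat [count P (iota (N * a + s') _)](eq_in_count (a2 := pred0)) ?count_pred0 ?addn0.
  by apply: leq_trans (count_size _ _) _; rewrite size_iota.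
move=> q; rewrite mem_iota => /andP[h1 h2] /=; apply/negbTE/HP.
have -> : q = (a * N + (q - N * a))%N by rewrite mulnC subnKC //; lia.
rewrite modnMDl modn_small; lia.
Qed.

Lemma split_props (S : eqType) (x y : seq S) :
  size x = size y -> x != y ->
  [/\ take (split_at x y) x = take (split_at x y) y,
      (split_at x y < size x)%N &
      forall x0, nth x0 x (split_at x y) != nth x0 y (split_at x y)].
Proof.
move=> sz neq; rewrite /split_at.
have P0 : (fun t : 'I_(size x).+1 => take t x == take t y) ord0 by rewrite /= !take0.
rewrite (@bigop.bigmax_eq_arg _ ord0 (fun t : 'I_(size x).+1 => take t x == take t y) (fun t => nat_of_ord t) P0).
case: arg_maxnP => // t /eqP Ht Hmax.
have tlt : (t < size x)%N.
  rewrite ltn_neqAle -ltnS ltn_ord andbT; apply/eqP => et.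
  by move/negP: neq; apply; apply/eqP; rewrite -(take_size x) -(take_size y) -sz -et.
split => // x0; apply/negP => /eqP en.
have t1 : (t.+1 < (size x).+1)%N by [].
have H1 : take (Ordinal t1) x == take (Ordinal t1) y.
  by apply/eqP; rewrite /= (take_nth x0 tlt) (take_nth x0 (_ : t < size y)%N) -?sz // Ht en.
by have := Hmax (Ordinal t1) H1; rewrite /= ltnn.
Qed.

Lemma dist_main (F : fieldType) n s r (A : 'M[F]_((r + s) * n)) (x y : seq 'rV[F]_s) :
  (0 < r)%N -> (0 < s)%N -> lower_triangular A -> totally_non_singular A ->
  size x = size y -> (size x <= n)%N -> x != y ->
  (r * (size x - split_at x y) < (r + s) * hamming (TC_A A x) (TC_A A y))%N.
Proof.
move=> r0 s0 Lo Tn sz kn neq.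
have [Ht tk tn] := split_props sz neq.
move: (split_at x y) Ht tk tn => t Ht tk tn.
set k := size x in kn tk *.
have N0 : (0 < r + s)%N by rewrite addn_gt0 r0.
pose d j := padded_coord r x j - padded_coord r y j.
pose o q := \sum_(j < (r + s) * n) mxnat A q j * d j.
have dmod : forall q, (s <= q %% (r + s))%N -> d q = 0.
  by move=> q h; rewrite /d /padded_coord ltnNge h subrr.
have dlow : forall j, (j < (r + s) * t)%N -> d j = 0.
  move=> j hj; have hj' : (j %/ (r + s) < t)%N by rewrite ltn_divLR // mulnC.
  by rewrite /d /padded_coord -(nth_take 0 hj' x) Ht nth_take // subrr.
have [c cs dc] : exists2 c, (c < s)%N & d ((r + s) * t + c)%N != 0.
  case: (boolP [exists c : 'I_s, (nth 0 x t) ord0 c != (nth 0 y t) ord0 c]).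
    move=> /existsP[c hc]; exists c => //.
    have hdiv : (((r + s) * t + c) %/ (r + s) = t)%N.
      by rewrite mulnC divnMDl // divn_small ?addn0 //; apply: (leq_trans (ltn_ord c)); rewrite leq_addl.
    have hmod : (((r + s) * t + c) %% (r + s) = c)%N.
      by rewrite mulnC modnMDl modn_small //; apply: (leq_trans (ltn_ord c)); rewrite leq_addl.
    by rewrite /d /padded_coord hdiv hmod ltn_ord !rvnatE subr_eq0.
  move=> /existsPn hall; have := tn 0 => /negP; case.
  by apply/eqP/rowP => c; have := hall c; rewrite negbK => /eqP.
have exd : exists j, d j != 0 by exists ((r + s) * t + c)%N.
case: (ex_minnP exd) => j1 dj1 j1min.
have dlt : forall j, (j < j1)%N -> d j = 0.
  by move=> j hj; apply/eqP; apply: contraTT hj => h; rewrite -leqNgt j1min.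
have j1ge : ((r + s) * t <= j1)%N.
  by rewrite leqNgt; apply/negP => h; move: dj1; rewrite dlow // eqxx.
have j1le : (j1 < (r + s) * t + s)%N.
  by apply: (leq_ltn_trans (j1min _ dc)); rewrite ltn_add2l.
have K := key (lowt_mxnat Lo) (tnsn_of Tn) dj1 dlt.
set Pz := fun i => _ in K; set Pd := fun j => _ in K.
have Nk : ((r + s) * t.+1 <= (r + s) * k)%N by rewrite leq_mul2l tk orbT.
have Nn : ((r + s) * k <= (r + s) * n)%N by rewrite leq_mul2l kn orbT.
have hj1m : (j1 < (r + s) * n)%N.
  apply: (leq_trans _ Nn); apply: (leq_trans _ Nk); apply: (leq_trans j1le).
  by rewrite mulnS; nia.
have oj1 : o j1 != 0.
  have := K j1; rewrite leqnn hj1m => /(_ isT).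
  rewrite (_ : iota 0 j1.+1 = iota 0 j1 ++ [:: j1]); last by rewrite -addn1 iotaD.
  rewrite !count_cat /=.
  have -> : count Pd (iota 0 j1) = 0%N.
    rewrite (eq_in_count (a2 := pred0)) ?count_pred0 // => j.
    by rewrite mem_iota => /andP[_ h]; rewrite /Pd /= dlt ?eqxx.
  rewrite /Pd /Pz /= dj1 leqnn /=.
  by case: (o j1 == 0) => //; lia.
have j1k : (j1 < (r + s) * k)%N.
  apply: (leq_trans _ Nk); apply: (leq_trans j1le).
  by rewrite mulnS; nia.
pose L' := (k - t.+1)%N.
have ek : k = (t.+1 + L')%N by rewrite subnKC.
have hkt : (k - t = L'.+1)%N by rewrite /L'; lia.
pose Q B := all (fun q => o q == 0) (iota ((r + s) * B) (r + s)).
have Hh : hamming (TC_A A x) (TC_A A y) = count (predC Q) (iota 0 k).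
  rewrite /hamming /TC_A -sz count_zip_map; apply: eq_in_count => i.
  rewrite mem_iota add0n => /andP[_ hi] /=; rewrite -subr_eq0; congr negb.
  have {}hi : (i < k)%N by [].
  rewrite (_ : _ - _ = \row_(c' < r + s) o ((r + s) * i + c')%N); last first.
    apply/rowP => c'; rewrite !mxE -sumrB.
    under eq_bigr do rewrite -mulrBr.
    symmetry; rewrite /o (@sum_ext_zero _ ((r + s) * k) ((r + s) * n)
       (fun j => mxnat A ((r + s) * i + c')%N j * d j)) //.
    move=> j /andP[hj _]; rewrite (lowt_mxnat Lo) ?mul0r //.
    apply: (leq_trans _ hj); have := ltn_ord c'.
    have := leq_mul (leqnn (r + s)) hi; rewrite mulnS; lia.
  apply/eqP/allP => [E q|H].
    rewrite mem_iota => /andP[h1 h2].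
    have hq : (q - (r + s) * i < r + s)%N by lia.
    move/matrixP: E => /(_ ord0 (Ordinal hq)); rewrite !mxE /= subnKC // => ->.
    by rewrite eqxx.
  apply/rowP => c'; rewrite !mxE; apply/eqP; apply: H.
  by rewrite mem_iota leq_addr ltn_add2l ltn_ord.
have HW : (count Pd (iota 0 ((r + s) * k)) <= s * L'.+1)%N.
  rewrite (_ : iota 0 ((r + s) * k) = iota 0 ((r + s) * t) ++ iota ((r + s) * t) ((r + s) * (k - t))); last first.
    by rewrite -iotaD ?add0n -mulnDr subnKC // ltnW.
  rewrite count_cat.
  have -> : count Pd (iota 0 ((r + s) * t)) = 0%N.
    rewrite (eq_in_count (a2 := pred0)) ?count_pred0 // => j.
    by rewrite mem_iota => /andP[_ h]; rewrite /Pd /= dlow ?eqxx.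
  rewrite add0n hkt; apply: count_blocks_le; last by rewrite leq_addl.
  by move=> q hq; rewrite /Pd /= dmod ?eqxx.
pose m0 := count Q (iota t.+1 L').
have HZ : ((r + s) * m0 <= count Pz (iota 0 ((r + s) * k)))%N.
  rewrite (_ : iota 0 ((r + s) * k) = iota 0 ((r + s) * t.+1) ++ iota ((r + s) * t.+1) ((r + s) * L')); last first.
    by rewrite -iotaD ?add0n -mulnDr -ek.
  rewrite count_cat; apply: leq_trans (leq_addl _ _).
  have -> : count Pz (iota ((r + s) * t.+1) ((r + s) * L')) =
            count (fun q => o q == 0) (iota ((r + s) * t.+1) ((r + s) * L')).
    apply: eq_in_count => q; rewrite mem_iota => /andP[hq _]; rewrite /Pz /=.
    have -> // : (j1 <= q)%N.
    apply: ltnW; apply: (leq_trans j1le); apply: leq_trans hq; rewrite mulnS; nia.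
  exact: count_blocks_ge.
have HK : (count Pz (iota 0 ((r + s) * k)) < count Pd (iota 0 ((r + s) * k)))%N.
  have k0 : (0 < (r + s) * k)%N by rewrite muln_gt0 N0; lia.
  have := K ((r + s) * k).-1; rewrite prednK //; apply.
  by apply/andP; split; lia.
have HH : (1 + count (predC Q) (iota t.+1 L') <= count (predC Q) (iota 0 k))%N.
  rewrite (_ : iota 0 k = iota 0 t ++ iota t L'.+1); last first.
    by rewrite -hkt -iotaD ?add0n subnKC // ltnW.
  rewrite count_cat /=.
  have -> : ~~ Q t.
    apply/negP => /allP /(_ j1); rewrite mem_iota j1ge /=.
    have -> : (j1 < (r + s) * t + (r + s))%N by apply: (leq_trans j1le); lia.
    by move=> /(_ isT); apply/negP.
  by rewrite leq_addl.
have HC : (m0 + count (predC Q) (iota t.+1 L') = L')%N by rewrite /m0 count_predC size_iota.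
rewrite Hh hkt; nia.
Qed.

Theorem theorem2p6 (R : realType) (F : finFieldType) (n r s : nat)
    (A : 'M[F]_((r + s) * n)) :
  (0 < n)%N -> (0 < r)%N -> (0 < s)%N ->
  lower_triangular A -> totally_non_singular A ->
  [/\ is_truncated_tree_code n (@TC_A F n s r A),
      is_MDS R n (@TC_A F n s r A) &
      (r%:R / (r + s)%:R : R) < tc_distance R n (@TC_A F n s r A)].
Proof.
move=> n0 r0 s0 Lo Tn.
have N0 : (0 < r + s)%N by rewrite addn_gt0 r0.
have dist : (r%:R / (r + s)%:R : R) < tc_distance R n (@TC_A F n s r A).
  rewrite /tc_distance.
  have Nn0 : (0 : R) < ((r + s) * n)%:R by rewrite ltr0n muln_gt0 N0.
  apply: (@lt_le_trans _ _ (((r * n).+1)%:R / ((r + s) * n)%:R)).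
    rewrite ltr_pdivlMr // natrM mulrA divfK ?pnatr_eq0 -?lt0n //.
    by rewrite -natrM ltr_nat.
  apply: lb_le_inf.
    set x0 : seq 'rV[F]_s := [:: 0].
    set y0 : seq 'rV[F]_s := [:: const_mx 1].
    exists ((hamming (TC_A A x0) (TC_A A y0))%:R / (size x0 - split_at x0 y0)%:R).
    exists x0, y0; split => //.
    apply/eqP => [[/matrixP/(_ ord0 (Ordinal s0))]]; rewrite !mxE => /eqP.
    by rewrite eq_sym oner_eq0.
  move=> d /= [x [y [sz kn neq ->]]].
  have := dist_main r0 s0 Lo Tn sz kn neq.
  have [_ tk _] := split_props sz neq.
  move: (split_at x y) tk => t tk.
  move: (hamming _ _) => H hH.
  have L0 : (0 : R) < (size x - t)%:R by rewrite ltr0n subn_gt0.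
  rewrite ler_pdivlMr // mulrAC ler_pdivrMr // -!natrM ler_nat.
  move: (size x - t)%N (leq_subr t (size x)) hH => L hL hH.
  have := leq_mul hH (leqnn n).
  have Ln : (L <= n)%N by apply: leq_trans hL kn.
  nia.
split => //.
- split.
    by move=> x _; rewrite /TC_A size_map size_iota.
  move=> x y i hx hy hix hiy ht; rewrite !onth_TC //; congr Some.
  exact: TC_causal.
- have q1 : (1 < #|F|)%N by exact: card_finNzRing_gt1.
  have q1' : (1 : R) < #|F|%:R by rewrite ltr1n.
  have q0 : (0 : R) < #|F|%:R by apply: lt_trans q1'.
  rewrite /is_MDS !card_mx !mul1n !natrX !lnXn //.
  have lq : ln (#|F|%:R : R) != 0 by rewrite gt_eqF // ln_gt0.
  move: (ln (#|F|%:R : R)) lq => a lq.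
  have -> : 1 - a *+ s / (a *+ (r + s)) = (r%:R / (r + s)%:R : R).
    rewrite -[a *+ s]mulr_natr -[a *+ (r + s)]mulr_natr invfM mulrACA mulfV // mul1r.
    have N' : (r%:R + s%:R : R) != 0 by rewrite -natrD pnatr_eq0 -lt0n N0.
    by rewrite natrD -{1}(divff N') -mulrBl addrK.
  exact: dist.
Qed.
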